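(* Let $\psi\in\mathrm{Sp}_0(V,\omega)$ be fixed. For every $\Phi\in\mathrm{Sp}_\psi(V,\omega)$ the linear operator \[ \mathcal C_\psi(\Phi)=J(\psi-\mathrm{Id})(\Phi-\psi)^{-1}(\Phi-\mathrm{Id}):V\to V \] is symmetric with respect to $\langle\cdot,\cdot\rangle$, and $\mathrm{Ker}\big(\mathcal C_\psi(\Phi)\big)=\mathrm{Ker}(\Phi-\mathrm{Id})$.
   Context: Let $(V,\omega)$ be a real symplectic vector space of finite dimension and $\mathrm{Sp}(V,\omega)$ its symplectic group. Fix a linear map $J:V\to V$ with $J^2=-\mathrm{Id}$ and a positive definite inner product $\langle\cdot,\cdot\rangle$ on $V$ such that $\omega(u,v)=\langle Ju,v\rangle$ for all $u,v\in V$. For $\psi\in\mathrm{Sp}(V,\omega)$, $\mathrm{Sp}_\psi(V,\omega)$ denotes the set of $\Phi\in\mathrm{Sp}(V,\omega)$ such that $\Phi-\psi$ is invertible, and $\mathrm{Sp}_0(V,\omega)=\mathrm{Sp}_{\mathrm{Id}}(V,\omega)$. *)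

(* Defs.v *)
(* V is modelled as R^n = 'cV[R]_n (column vectors), linear
   maps as n x n matrices acting on the left. *)
From mathcomp Require Import all_boot all_order all_algebra.
From mathcomp Require Import reals.
Set Implicit Arguments. Unset Strict Implicit. Unset Printing Implicit Defensive.
Import Order.TTheory GRing.Theory Num.Theory.
Local Open Scope ring_scope.

Section Defs.
Variables (R : realType) (n : nat).

Definition bform (M : 'M[R]_n) (u v : 'cV[R]_n) : R := (u^T *m M *m v) 0 0.

Definition is_inner_product (G : 'M[R]_n) : Prop :=
  G^T = G /\ forall u : 'cV[R]_n, u != 0 -> 0 < bform G u u.

Definition is_symplectic_form (W : 'M[R]_n) : Prop :=
  W^T = - W /\ W \in unitmx.

Definition Sp (W : 'M[R]_n) (Phi : 'M[R]_n) : Prop :=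
  Phi \in unitmx /\
  forall u v : 'cV[R]_n, bform W (Phi *m u) (Phi *m v) = bform W u v.

Definition Sp_psi (W psi Phi : 'M[R]_n) : Prop :=
  Sp W Phi /\ (Phi - psi) \in unitmx.

Definition C_psi (J psi Phi : 'M[R]_n) : 'M[R]_n :=
  J *m (psi - 1%:M) *m invmx (Phi - psi) *m (Phi - 1%:M).

End Defs.

(* Main.v *)
Require Import Defs.
From mathcomp Require Import all_boot all_order all_algebra.
From mathcomp Require Import reals.
From mathcomp Require Import lra.
Import Order.TTheory GRing.Theory Num.Theory.
Local Open Scope ring_scope.

Section H.
Variables (R : realType) (n : nat).

Lemma bform_tr (M : 'M[R]_n) a b : bform M a b = bform M^T b a.
Proof.
rewrite /bform -[in LHS](trmxK (a^T *m M *m b)) mxE.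
by rewrite !trmx_mul trmxK mulmxA.
Qed.

Lemma bformBl (M : 'M[R]_n) a b c : bform M (a - b) c = bform M a c - bform M b c.
Proof. by rewrite /bform linearB /= !mulmxBl !mxE. Qed.

Lemma bformBr (M : 'M[R]_n) a b c : bform M c (a - b) = bform M c a - bform M c b.
Proof. by rewrite /bform !mulmxBr !mxE. Qed.

Lemma bformNm (M : 'M[R]_n) a b : bform (- M) a b = - bform M a b.
Proof. by rewrite /bform mulmxN mulNmx !mxE. Qed.

Lemma zmod_t (V : zmodType) (a b c d : V) : a - c = b - d -> a - b = c - d.
Proof. move=> e. by rewrite -(subrK c a) e -addrA addrC addrA subrK. Qed.

Lemma bformMl (M A : 'M[R]_n) a b : bform M (A *m a) b = bform (A^T *m M) a b.
Proof. by rewrite /bform trmx_mul !mulmxA. Qed.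

Lemma bformMr (M A : 'M[R]_n) a b : bform M a (A *m b) = bform (M *m A) a b.
Proof. by rewrite /bform !mulmxA. Qed.
End H.

Theorem lemma2p6 (R : realType) (n : nat) (W J G : 'M[R]_n)
  (hW : is_symplectic_form W) (hG : is_inner_product G)
  (hJ : J *m J = - 1%:M)
  (hcompat : forall u v : 'cV[R]_n, bform W u v = bform G (J *m u) v)
  (psi : 'M[R]_n) (hpsi : Sp_psi W 1%:M psi)
  (Phi : 'M[R]_n) (hPhi : Sp_psi W psi Phi) :
  (forall u v : 'cV[R]_n,
      bform G (C_psi J psi Phi *m u) v = bform G u (C_psi J psi Phi *m v)) /\
  (forall v : 'cV[R]_n,
      C_psi J psi Phi *m v = 0 <-> (Phi - 1%:M) *m v = 0).
Proof.
case: hW => WT Wu; case: hG => GT _.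
case: hpsi => [[_ spsi] upsi]; case: hPhi => [[_ sPhi] uM].
have Cu : forall u : 'cV[R]_n, C_psi J psi Phi *m u =
   J *m ((psi - 1%:M) *m (invmx (Phi - psi) *m ((Phi - 1%:M) *m u))).
  by move=> u; rewrite /C_psi -!mulmxA.
split.
- move=> u v.
  rewrite !Cu -hcompat [in RHS]bform_tr GT -hcompat bform_tr WT.
  set x := invmx (Phi - psi) *m ((Phi - 1%:M) *m u).
  set y := invmx (Phi - psi) *m ((Phi - 1%:M) *m v).
  have hx : Phi *m (x - u) = psi *m x - u.
    have := mulKVmx uM ((Phi - 1%:M) *m u); rewrite -/x.
    rewrite !mulmxBl !mulmxBr !mul1mx; exact: zmod_t.
  have hy : Phi *m (y - v) = psi *m y - v.
    have := mulKVmx uM ((Phi - 1%:M) *m v); rewrite -/y.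
    rewrite !mulmxBl !mulmxBr !mul1mx; exact: zmod_t.
  have := sPhi (x - u) (y - v); rewrite hx hy.
  rewrite bformNm !mulmxBl !mul1mx !bformBl !bformBr spsi => e.
  have sk : forall a b, bform W a b = - bform W b a.
    by move=> a b; rewrite bform_tr WT bformNm.
  rewrite (sk v (psi *m x)) (sk v x) (sk (psi *m y) u) (sk y u).
  lra.
- move=> v; rewrite Cu; split; last by move=> ->; rewrite !mulmx0.
  set w := (Phi - 1%:M) *m v => h.
  have h1 : (psi - 1%:M) *m (invmx (Phi - psi) *m w) = 0.
    move: h; set z := (psi - 1%:M) *m _ => h.
    have : J *m (J *m z) = - z by rewrite mulmxA hJ mulNmx mul1mx.
    by rewrite h mulmx0 => /eqP; rewrite eq_sym oppr_eq0 => /eqP.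
  have h2 : invmx (Phi - psi) *m w = 0.
    by rewrite -(mulKmx upsi (invmx (Phi - psi) *m w)) h1 mulmx0.
  by rewrite -(mulKVmx uM w) h2 mulmx0.
Qed.
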